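(* Let $\varepsilon>0$ be small, $x$ large, $0\le\theta\le\frac1{30}$, $\rho=\frac12(1-4\theta)-\varepsilon$, and $z_1\le x^{1/2}$. Let $$\mathcal{D}^{+,\mathrm{LIN}}=\{p_1\cdots p_r\le x^{\rho}:\ z_1\ge p_1>\dots>p_r,\ p_1\cdots p_{2k-2}p_{2k-1}^3\le x^{\rho}\text{ for all }k\ge1\}$$ ($p_i$ primes). Then for any $D\in[x^{1/5},x^{\rho}]$, every $d\in\mathcal{D}^{+,\mathrm{LIN}}$ can be written as $d=d_1d_2$ with positive integers $d_1,d_2$ satisfying $d_1\le D$ and $d_1d_2^2\le x^{1-4\theta-2\varepsilon^2}/D$; moreover one can take either $d_1\ge x^{0.1}$ or $d_2=1$.
   Context: Conditions in the definition of $\mathcal{D}^{+,\mathrm{LIN}}$ involving indices larger than $r$ are vacuous. *)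

(* Defs.v *)
From HB Require Import structures.
From mathcomp Require Import all_boot all_order all_algebra.
From mathcomp Require Import all_classical all_reals all_analysis.
Set Implicit Arguments. Unset Strict Implicit. Unset Printing Implicit Defensive.
Import Order.TTheory GRing.Theory Num.Theory.
Local Open Scope ring_scope.

(* The list s = [p_1; ...; p_r]
   is 0-indexed, so p_{2k-1} = nth 0 s (2k-2); we write it with j = k-1. *)
Definition DLIN (R : realType) (x rho z1 : R) (d : nat) : Prop :=
  exists s : seq nat,
    all prime s /\
    sorted (fun m n : nat => (n < m)%N) s /\
    d = (\prod_(p <- s) p)%N /\
    (d%:R <= x `^ rho) /\
    (forall p, p \in s -> p%:R <= z1) /\
    (forall j : nat, (2 * j < size s)%N ->
       (((\prod_(p <- take (2 * j) s) p) * (nth 0%N s (2 * j)) ^ 3)%N)%:R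
         <= x `^ rho).

(* Main.v *)
Require Import Defs.
From HB Require Import structures.
From mathcomp Require Import all_boot all_order all_algebra.
From mathcomp Require Import all_classical all_reals all_analysis.
From mathcomp Require Import ring lra.
Import Order.TTheory GRing.Theory Num.Theory.
Local Open Scope ring_scope.

Section G.
Variable R : realFieldType.

Lemma prod_cons2 (a : nat) l : (\prod_(p <- a :: l) p = a * \prod_(p <- l) p)%N.
Proof. by rewrite big_cons. Qed.

Lemma sub_cons (a : nat) (l1 l2 : seq nat) : {subset l1 <= l2} -> {subset a :: l1 <= a :: l2}.
Proof. move=> s y; rewrite inE => /orP [/eqP ->|/s h]; [exact: mem_head | by rewrite inE h orbT]. Qed.

Lemma sub_cons_r (a : nat) (l1 l2 : seq nat) : {subset l1 <= l2} -> {subset l1 <= a :: l2}.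
Proof. by move=> s y /s h; rewrite inE h orbT. Qed.

Lemma greedy (n : nat) : forall (l : seq nat), (size l <= n)%N ->
  forall R1 R2 : R, 1 <= R1 -> 1 <= R2 ->
  all (fun p => 0 < p)%N l -> sorted (fun m n : nat => (n < m)%N) l ->
  (forall j : nat, (2 * j < size l)%N ->
     (((\prod_(p <- take (2 * j) l) p) * (nth 0%N l (2 * j)) ^ 3)%N)%:R <= R1 * R2) ->
  exists lA lB : seq nat,
    ((\prod_(p <- lA) p) * (\prod_(p <- lB) p) = \prod_(p <- l) p)%N /\
    {subset lA <= l} /\ {subset lB <= l} /\
    (\prod_(p <- lA) p)%:R <= R1 /\ (\prod_(p <- lB) p)%:R <= R2.
Proof.
elim: n => [|n IH] l.
  rewrite leqn0 => /nilP -> R1 R2 h1 h2 _ _ _.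
  by exists [::], [::]; rewrite !big_nil.
case: l => [|a l] hs R1 R2 h1 h2.
  move=> _ _ _; by exists [::], [::]; rewrite !big_nil.
wlog le21 : R1 R2 h1 h2 / R2 <= R1.
  move=> W hp hsort hc.
  case: (lerP R2 R1) => h; first exact: W.
  have [lA [lB [e [sA [sB [pA pB]]]]]] := W R2 R1 h2 h1 (ltW h) hp hsort
     (fun j hj => ltac:(rewrite mulrC; exact: hc j hj)).
  exists lB, lA; split; first by rewrite mulnC.
  by do !split.
move=> /= /andP [apos hp] hsort hc.
have ha1 : (1 : R) <= a%:R by rewrite ler1n.
have hc0 := hc 0%N isT.
rewrite /= ?take0 big_nil mul1n natrX in hc0.
have haR1 : a%:R <= R1 by nra.
case: l hs hp hsort hc => [|b l] hs hp hsort hc.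
  exists [:: a], [::]; rewrite !big_cons !big_nil /=.
  split; first by rewrite !muln1.
  split; first by [].
  split; first by move=> y; rewrite inE.
  by rewrite muln1.
case/andP: hp => bpos hp.
have /andP [ba hsort'] := hsort.
have hb1 : (1 : R) <= b%:R by rewrite ler1n.
have hba : b%:R <= (a%:R : R) by rewrite ler_nat ltnW.
have hsl : (size l <= n)%N by move: hs => /=; rewrite !ltnS; apply: leq_trans.
have hsortl : sorted (fun m n : nat => (n < m)%N) l.
  exact: path_sorted hsort'.
have hcl : forall j : nat, (2 * j < size l)%N ->
  (((\prod_(p <- take (2 * j) l) p) * (nth 0%N l (2 * j)) ^ 3)%N)%:R * (a%:R * b%:R) <= R1 * R2.
  move=> j hj.
  have hj' : (2 * j.+1 < size [:: a, b & l])%N by rewrite /= mulnS /= !ltnS.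
  have := hc j.+1 hj'; rewrite mulnS /= !big_cons.
  apply: le_trans; rewrite -!natrM ler_nat add0n; apply: eq_leq; ring.
case: (lerP (a%:R * b%:R) R1) => hab.
  have [lA [lB [e [sA [sB [pA pB]]]]]] := IH l hsl (R1 / (a%:R * b%:R)) R2
     ltac:(by rewrite ler_pdivlMr ?mul1r //; nra) h2 hp hsortl
     (fun j hj => ltac:(rewrite mulrAC ler_pdivlMr; [exact: hcl|nra])).
  exists [:: a, b & lA], lB; rewrite !big_cons; split.
    by rewrite -e; ring.
  split; first by do 2 apply: sub_cons.
  split; first by do 2 apply: sub_cons_r.
  split => //; rewrite !natrM mulrA; move: pA; rewrite ler_pdivlMr; first by rewrite mulrC.
  nra.
have hbR2 : b%:R <= R2.
  rewrite leNgt; apply/negP => hlt; nra.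
have [lA [lB [e [sA [sB [pA pB]]]]]] := IH l hsl (R1 / a%:R) (R2 / b%:R)
     ltac:(by rewrite ler_pdivlMr ?mul1r //; nra) ltac:(by rewrite ler_pdivlMr ?mul1r //; nra) hp hsortl
     (fun j hj => ltac:(rewrite mulf_div ler_pdivlMr; [exact: hcl|nra])).
exists (a :: lA), (b :: lB); rewrite !big_cons; split.
  by rewrite -e; ring.
split; first by apply: sub_cons; apply: sub_cons_r.
split; first by apply: sub_cons_r; apply: sub_cons.
split.
  by rewrite natrM; move: pA; rewrite ler_pdivlMr; [rewrite mulrC|nra].
by rewrite natrM; move: pB; rewrite ler_pdivlMr; [rewrite mulrC|nra].
Qed.

Lemma prod_pos (l : seq nat) : all (fun p => 0 < p)%N l -> (0 < \prod_(p <- l) p)%N.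
Proof.
elim: l => [|a l IH]; rewrite ?big_nil ?big_cons //= => /andP [ha hl].
by rewrite muln_gt0 ha IH.
Qed.

Lemma move_lem (l : seq nat) : forall c T : R, 0 < c -> c < T ->
  all (fun p => 0 < p)%N l -> (forall q, q \in l -> q%:R < T) ->
  T <= c * (\prod_(p <- l) p)%:R ->
  exists k, T <= c * (\prod_(p <- take k l) p)%:R /\ c * (\prod_(p <- take k l) p)%:R < T * T.
Proof.
elim: l => [|a l IH] c T hc hcT; rewrite ?big_nil.
  by move=> _ _; rewrite mulr1 => h; move: (lt_le_trans hcT h); rewrite ltxx.
move=> /= /andP [ha hl] hq; rewrite big_cons natrM mulrA => h.
have haT : a%:R < T by apply: hq; exact: mem_head.
have ha0 : (0 : R) <= a%:R by [].
case: (lerP T (c * a%:R)) => hca.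
  exists 1%N; rewrite /= take0 big_cons big_nil muln1; split => //; nra.
have hca0 : 0 < c * a%:R by apply: mulr_gt0 => //; rewrite ltr0n.
have [k [h1 h2]] := IH (c * a%:R) T hca0 hca hl
   (fun q hq' => hq q ltac:(by rewrite inE hq' orbT)) h.
exists k.+1; rewrite /= big_cons natrM mulrA; by split.
Qed.

Lemma ok_lem (a b : nat) (P D : R) : 0 < D -> a%:R <= D -> b%:R <= P / D ->
  (a * b)%:R <= P -> ((a * b ^ 2)%N)%:R <= P * P / D.
Proof.
move=> hD ha hb hab.
have hb' : b%:R * D <= P by rewrite -ler_pdivlMr.
rewrite ler_pdivlMr // expnS expn1 mulnA natrM.
have h0 : (0 : R) <= b%:R by [].
have h1 : (0 : R) <= (a * b)%:R by [].
nra.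
Qed.

Lemma finish (L1 L2 : seq nat) (p1 : nat) (P D T : R) :
  all (fun p => 0 < p)%N L1 -> all (fun p => 0 < p)%N L2 -> 1 <= T -> T * T <= D ->
  (\prod_(p <- L1) p)%:R <= D -> (\prod_(p <- L2) p)%:R <= P / D ->
  (p1 <= \prod_(p <- L1) p)%N -> (forall q, q \in L2 -> q <= p1)%N ->
  D < ((\prod_(p <- L1) p * \prod_(p <- L2) p)%N)%:R ->
  ((\prod_(p <- L1) p * \prod_(p <- L2) p)%N)%:R <= P ->
  exists d1 d2 : nat, (0 < d1)%N /\ (0 < d2)%N /\
     (\prod_(p <- L1) p * \prod_(p <- L2) p = d1 * d2)%N /\
     d1%:R <= D /\ ((d1 * d2 ^ 2)%N)%:R <= P * P / D /\ (T <= d1%:R \/ d2 = 1%N).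
Proof.
move=> h1 h2 hT hTD hA hB hp1 hq hd hdP.
have hD : 0 < D by nra.
have pA := @prod_pos _ h1; have pB := @prod_pos _ h2.
have simple : T <= (\prod_(p <- L1) p)%:R -> exists d1 d2 : nat, (0 < d1)%N /\ (0 < d2)%N /\
     (\prod_(p <- L1) p * \prod_(p <- L2) p = d1 * d2)%N /\
     d1%:R <= D /\ ((d1 * d2 ^ 2)%N)%:R <= P * P / D /\ (T <= d1%:R \/ d2 = 1%N).
  move=> hT1; exists (\prod_(p <- L1) p), (\prod_(p <- L2) p); do !split => //; last by left.
  exact: ok_lem.
case: (lerP T (\prod_(p <- L1) p)%:R) => hT1; first exact: simple.
case: (lerP T p1%:R) => hTp.
  apply: simple; apply: le_trans hTp _; by rewrite ler_nat.
have hc0 : (0 : R) < (\prod_(p <- L1) p)%:R by rewrite ltr0n.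
have hqT : forall q, q \in L2 -> q%:R < T.
  move=> q /hq hq'; apply: le_lt_trans hTp; by rewrite ler_nat.
have hTd : T <= (\prod_(p <- L1) p)%:R * (\prod_(p <- L2) p)%:R.
  rewrite -natrM; apply: ltW; apply: le_lt_trans hd; nra.
have [k [k1 k2]] := move_lem L2 _ _ hc0 hT1 h2 hqT hTd.
have eL2 : (\prod_(p <- L2) p = \prod_(p <- take k L2) p * \prod_(p <- drop k L2) p)%N.
  by rewrite -{1}(cat_take_drop k L2) big_cat.
have ptk : (0 < \prod_(p <- take k L2) p)%N by move: pB; rewrite eL2 muln_gt0 => /andP [].
have pdk : (0 < \prod_(p <- drop k L2) p)%N by move: pB; rewrite eL2 muln_gt0 => /andP [].
exists (\prod_(p <- L1) p * \prod_(p <- take k L2) p)%N, (\prod_(p <- drop k L2) p).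
split; first by rewrite muln_gt0 pA ptk.
split => //.
split; first by rewrite eL2 mulnA.
have hd1 : ((\prod_(p <- L1) p * \prod_(p <- take k L2) p)%N)%:R <= D.
  rewrite natrM; apply: ltW; exact: lt_le_trans k2 hTD.
split => //.
split; last by left; rewrite natrM.
apply: ok_lem => //.
  apply: le_trans hB; rewrite ler_nat eL2; apply: leq_pmull => //.
by rewrite -mulnA -eL2.
Qed.

Lemma all_sub (l1 l2 : seq nat) : {subset l1 <= l2} -> all (fun p => 0 < p)%N l2 -> all (fun p => 0 < p)%N l1.
Proof. by move=> s h; apply/allP => q /s hq; exact: (allP h) q hq. Qed.

Lemma cube_le (x D : R) : 0 < D -> x ^+ 3 <= D ^+ 3 -> x <= D.
Proof.
move=> hD h; rewrite leNgt; apply/negP => hlt.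
have := ltrXn2r 3 (ltW hD) hlt; rewrite /= => h'.
by move: (lt_le_trans h' h); rewrite ltxx.
Qed.

Lemma core (s : seq nat) (P D T : R) :
  all prime s -> sorted (fun m n : nat => (n < m)%N) s -> 1 <= T -> T * T <= D -> D <= P ->
  P <= D ^+ 3 -> (\prod_(p <- s) p)%:R <= P ->
  (forall j, (2 * j < size s)%N ->
     (((\prod_(p <- take (2 * j) s) p) * (nth 0%N s (2 * j)) ^ 3)%N)%:R <= P) ->
  exists d1 d2 : nat, (0 < d1)%N /\ (0 < d2)%N /\ (\prod_(p <- s) p = d1 * d2)%N /\
     d1%:R <= D /\ ((d1 * d2 ^ 2)%N)%:R <= P * P / D /\ (T <= d1%:R \/ d2 = 1%N).
Proof.
move=> hpr hsort hT hTD hDP hPD hdP hc.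
have hpos : all (fun p => 0 < p)%N s by apply/allP => q hq; exact: prime_gt0 ((allP hpr) q hq).
have hD : 0 < D by nra.
case: (lerP (\prod_(p <- s) p)%:R D) => hd.
  exists (\prod_(p <- s) p), 1%N.
  split; first exact: prod_pos.
  split => //; split; first by rewrite muln1.
  split => //; split; last by right.
  exact: (@ok_lem (\prod_(p <- s) p) 1 P D hD hd
    ltac:(by rewrite ler_pdivlMr // mul1r) ltac:(by rewrite muln1)).
case: s hpr hsort hc hd hdP hpos => [|p1 [|p2 rest]] hpr hsort hc hd hdP hpos.
- move: hd; rewrite big_nil => hd; nra.
- have := hc 0%N isT; rewrite /= big_nil mul1n natrX => h3.
  move: hd; rewrite big_cons big_nil muln1 => hd.
  have := @cube_le _ _ hD (le_trans h3 hPD); rewrite leNgt hd //.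
have := hc 0%N isT; rewrite /= big_nil mul1n natrX => h3.
move: hpos => /= /andP [pos1 /andP [pos2 posr]].
have h0 : (0 : R) <= p1%:R by [].
have hp1D : p1%:R <= D.
  exact: @cube_le _ _ hD (le_trans h3 hPD).
have etrans : transitive (fun m n : nat => (n < m)%N).
  by move=> a b c h1 h2; exact: ltn_trans h2 h1.
have hall := order_path_min etrans hsort.
have hp21 : (p2 <= p1)%N by move: hall => /= /andP [/ltnW].
have hp21R : p2%:R <= (p1%:R : R) by rewrite ler_nat.
have h02 : (0 : R) <= p2%:R by [].
have [A0 [B0 [eAB [pA0 [pB0 [hA0 [hB0 [hpA subB]]]]]]]] :
  exists A0 B0 : seq nat, (\prod_(p <- A0) p * \prod_(p <- B0) p = p1 * p2)%N /\
    all (fun p => 0 < p)%N A0 /\ all (fun p => 0 < p)%N B0 /\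
    (\prod_(p <- A0) p)%:R <= D /\ (\prod_(p <- B0) p)%:R <= P / D /\
    (p1 <= \prod_(p <- A0) p)%N /\ {subset B0 <= p2 :: rest}.
  case: (lerP (p1%:R * p2%:R) D) => h12.
    exists [:: p1; p2], [::]; rewrite !big_cons !big_nil !muln1 /= pos1 pos2.
    do !split => //.
    - by rewrite natrM.
    - by rewrite ler_pdivlMr // mul1r.
    - by rewrite leq_pmulr.
  exists [:: p1], [:: p2]; rewrite !big_cons !big_nil !muln1 /= pos1 pos2.
  do !split => //.
  - rewrite ler_pdivlMr // leNgt; apply/negP => hlt.
    nra.
  - by move=> q; rewrite inE => /eqP ->; exact: mem_head.
have pA := @prod_pos _ pA0; have pB := @prod_pos _ pB0.
have hA0R : (0 : R) < (\prod_(p <- A0) p)%:R by rewrite ltr0n.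
have hB0R : (0 : R) < (\prod_(p <- B0) p)%:R by rewrite ltr0n.
set R1 := D / (\prod_(p <- A0) p)%:R.
set R2 := P / D / (\prod_(p <- B0) p)%:R.
have hR1 : 1 <= R1 by rewrite /R1 ler_pdivlMr // mul1r.
have hR2 : 1 <= R2 by rewrite /R2 ler_pdivlMr // mul1r.
have hR12 : R1 * R2 = P / (p1%:R * p2%:R).
  rewrite -natrM -eAB natrM /R1 /R2; field.
  by rewrite !gt_eqF.
have hcr : forall j : nat, (2 * j < size rest)%N ->
   (((\prod_(p <- take (2 * j) rest) p) * (nth 0%N rest (2 * j)) ^ 3)%N)%:R <= R1 * R2.
  move=> j hj.
  have hj' : (2 * j.+1 < size [:: p1, p2 & rest])%N by rewrite /= mulnS /= !ltnS.
  have := hc j.+1 hj'; rewrite mulnS /= !big_cons add0n hR12 => h.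
  rewrite ler_pdivlMr; last by rewrite mulr_gt0 // ltr0n.
  apply: le_trans h; rewrite -!natrM ler_nat; apply: eq_leq; ring.
have hsr : sorted (fun m n : nat => (n < m)%N) rest.
  by move: hsort => /= /andP [_ /path_sorted].
have [lA [lB [e [sA [sB [pAl pBl]]]]]] := greedy (size rest) rest (leqnn _) R1 R2 hR1 hR2 posr hsr hcr.
have eprod : (\prod_(p <- A0 ++ lA) p * \prod_(p <- B0 ++ lB) p = \prod_(p <- [:: p1, p2 & rest]) p)%N.
  by rewrite !big_cat /= mulnACA eAB e !big_cons mulnA.
have pAl' := @prod_pos _ (all_sub _ _ sA posr).
have [d1 [d2 [q1 [q2 [q3 q4]]]]] := @finish (A0 ++ lA) (B0 ++ lB) p1 P D T
  ltac:(by rewrite all_cat pA0 (all_sub _ _ sA posr))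
  ltac:(by rewrite all_cat pB0 (all_sub _ _ sB posr)) hT hTD
  ltac:(by rewrite big_cat natrM mulrC -ler_pdivlMr)
  ltac:(by rewrite big_cat natrM mulrC -ler_pdivlMr)
  ltac:(by rewrite big_cat /=; apply: leq_trans hpA _; rewrite leq_pmulr)
  ltac:(move=> q; rewrite mem_cat => /orP [/subB hq'|/sB hq]; apply: ltnW;
        apply: (allP hall) => //; by rewrite inE hq orbT)
  ltac:(by rewrite eprod) ltac:(by rewrite eprod).
exists d1, d2; split => //; split => //; split; first by rewrite -eprod.
by [].
Qed.

End G.

Theorem lemma9 (R : realType) :
  exists eps0 : R, 0 < eps0 /\
  forall eps : R, 0 < eps -> eps < eps0 ->
  exists x0 : R, forall (x theta z1 D : R) (d : nat),
    x0 <= x ->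
    0 <= theta -> theta <= 1 / 30 ->
    z1 <= x `^ (1 / 2) ->
    let rho := (1 - 4 * theta) / 2 - eps in
    x `^ (1 / 5) <= D -> D <= x `^ rho ->
    DLIN x rho z1 d ->
    exists d1 d2 : nat,
      (0 < d1)%N /\ (0 < d2)%N /\ d = (d1 * d2)%N /\
      d1%:R <= D /\
      ((d1 * d2 ^ 2)%N)%:R <= x `^ (1 - 4 * theta - 2 * eps ^+ 2) / D /\
      (x `^ (1 / 10) <= d1%:R \/ d2 = 1%N).
Proof.
exists 1; split; first exact: ltr01.
move=> eps he0 he1; exists 1.
move=> x theta z1 D d hx ht0 ht1 hz rho hD1 hD2 [s [hpr [hsort [hd [hdP [_ hc]]]]]].
have hx0 : 0 < x by exact: lt_le_trans ltr01 hx.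
have hxn0 : x != 0 by rewrite gt_eqF.
have pD : forall a b : R, x `^ (a + b) = x `^ a * x `^ b.
  by move=> a b; rewrite powRD // hxn0 implybT.
have hT : 1 <= x `^ (1 / 10).
  have h : (0 : R) <= 1 / 10 by lra.
  by have := ler_powR hx h; rewrite powRr0.
have hTT : x `^ (1 / 10) * x `^ (1 / 10) <= D.
  rewrite -pD; apply: le_trans hD1.
  have -> : (1 / 10 + 1 / 10 : R) = 1 / 5 by field.
  by [].
have hrho : rho <= 1 / 2 by rewrite /rho; lra.
have hPD : x `^ rho <= D ^+ 3.
  apply: le_trans (ler_powR hx hrho) _.
  have -> : (1 / 2 : R) = 1 / 5 * 3 - 1 / 10 by field.
  apply: le_trans (ler_powR hx (_ : _ <= 1 / 5 * 3)) _; first lra.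
  rewrite powRrM powR_mulrn ?powR_ge0 //.
  apply: lerXn2r => //; rewrite nnegrE ?powR_ge0 //.
  exact: le_trans (powR_ge0 _ _) hD1.
have [d1 [d2 [q1 [q2 [q3 [q4 [q5 q6]]]]]]] :=
  @core R s (x `^ rho) D (x `^ (1 / 10)) hpr hsort hT hTT hD2 hPD
    ltac:(by rewrite -hd) hc.
exists d1, d2; do 3 (split => //); first by rewrite hd.
split => //; split => //.
apply: le_trans q5 _.
have hD0 : 0 < D.
  apply: lt_le_trans hD1; exact: powR_gt0.
apply: ler_wpM2r; first by rewrite invr_ge0 ltW.
rewrite -pD; apply: ler_powR => //.
rewrite /rho; nra.
Qed.
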